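(* Let $I$ be a nonempty open real interval, let $\varphi:I\to\mathbb{R}$ be a strictly monotone function, let $f:I\to\mathbb{R}$ be an arbitrary function, and let $t\in\,]0,1[\,$. Assume that \[ \big(tf(x)+(1-t)f(y)\big)\varphi(tx+(1-t)y)=tf(x)\varphi(x)+(1-t)f(y)\varphi(y) \qquad\text{for all } x,y\in I. \] Then either $f$ is identically zero on $I$, or $f$ is nowhere zero on $I$, $f$ and $\varphi$ are infinitely many times differentiable on $I$, and there exists a nonzero constant $\gamma\in\mathbb{R}$ such that $f^2\varphi'=\gamma$ on $I$. *)

(* Defs.v *)
From Stdlib Require Import Reals.
From Coquelicot Require Import Coquelicot.
Open Scope R_scope.

Definition in_open_interval (a b : Rbar) (x : R) : Prop :=
  Rbar_lt a x /\ Rbar_lt x b.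

Definition strictly_increasing_on (I : R -> Prop) (phi : R -> R) : Prop :=
  forall x y, I x -> I y -> x < y -> phi x < phi y.
Definition strictly_decreasing_on (I : R -> Prop) (phi : R -> R) : Prop :=
  forall x y, I x -> I y -> x < y -> phi y < phi x.
Definition strictly_monotone_on (I : R -> Prop) (phi : R -> R) : Prop :=
  strictly_increasing_on I phi \/ strictly_decreasing_on I phi.

(* Infinitely differentiable on I (I open, so derivatives are local). *)
Definition smooth_on (I : R -> Prop) (g : R -> R) : Prop :=
  forall (n : nat) (x : R), I x -> ex_derive_n g n x.

(* Main.v *)
Require Import Defs.
From Stdlib Require Import Reals Lra Lia.
From Coquelicot Require Import Coquelicot.
Open Scope R_scope.

Lemma locR (x:R) (P:R->Prop) : (exists e, 0<e /\ forall y, Rabs (y-x) < e -> P y) -> locally x P.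
Proof. intros [e [He H]]. exists (mkposreal e He). intros y Hy. apply H. exact Hy. Qed.

Lemma locR_inv (x:R) (P:R->Prop) : locally x P -> exists e, 0<e /\ forall y, Rabs (y-x) < e -> P y.
Proof. intros [e H]. exists e. split. apply cond_pos. intros y Hy. apply H. exact Hy. Qed.

Lemma loc_aff (a b x:R) (P:R->Prop) : locally (a*x+b) P -> locally x (fun y => P (a*y+b)).
Proof.
  intros H. apply locR_inv in H. destruct H as [e [He H]].
  apply locR. exists (e / (Rabs a + 1)). split.
  { apply Rdiv_lt_0_compat; [lra| pose proof (Rabs_pos a); lra]. }
  intros y Hy. apply H.
  replace (a*y+b-(a*x+b)) with (a*(y-x)) by ring. rewrite Rabs_mult.
  assert (Ha := Rabs_pos a). assert (Hy0 := Rabs_pos (y-x)).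
  set (q := e/(Rabs a+1)) in *.
  assert (Hq : 0 < q) by (unfold q; apply Rdiv_lt_0_compat; lra).
  assert (Hqe : (Rabs a + 1) * q = e) by (unfold q; field; lra).
  apply Rle_lt_trans with (Rabs a * q). apply Rmult_le_compat_l; lra. nra.
Qed.

Lemma cont_aff (a b x:R) : continuous (fun y => a*y+b) x.
Proof.
  intros P HP. apply (loc_aff a b x P). exact HP.
Qed.

Fixpoint Ck (n:nat) (g:R->R) (x:R) : Prop :=
  match n with
  | O => continuous g x
  | S m => locally x (fun y => ex_derive g y) /\ Ck m (Derive g) x
  end.

Lemma Ck_ext n : forall g h x, locally x (fun y => g y = h y) -> Ck n g x -> Ck n h x.
Proof.
  induction n as [|n IH]; intros g h x Hl Hg; simpl in *.
  - apply (continuous_ext_loc h g x). eapply filter_imp; [|exact Hl]. intros y Hy; auto. exact Hg.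
  - destruct Hg as [Hd Hg]. split.
    + generalize (filter_and _ _ (locally_locally _ _ Hl) Hd).
      apply filter_imp. intros y [H1 H2]. eapply ex_derive_ext_loc; eauto.
    + apply (IH (Derive g)); auto.
      generalize (locally_locally _ _ Hl). apply filter_imp. intros y Hy. apply Derive_ext_loc; auto.
Qed.

Lemma Ck_S_le n : forall g x, Ck (S n) g x -> Ck n g x.
Proof.
  induction n as [|n IH]; intros g x H; simpl in *.
  - destruct H as [H _]. apply locally_singleton in H. exact (@ex_derive_continuous R_AbsRing R_NormedModule g x H).
  - destruct H as [H1 H2]. split; auto.
Qed.

Lemma Ck_le m n g x : (m <= n)%nat -> Ck n g x -> Ck m g x.
Proof. induction 1; auto. intros H'. apply IHle. apply Ck_S_le; auto. Qed.

Lemma Ck_const n : forall c x, Ck n (fun _ => c) x.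
Proof.
  induction n as [|n IH]; intros c x; simpl.
  - apply continuous_const.
  - split. apply filter_forall. intros y. apply ex_derive_const.
    apply (Ck_ext n (fun _ => 0)). apply filter_forall. intros y. rewrite Derive_const; auto. apply IH.
Qed.

Lemma Ck_id n : forall x, Ck n (fun y => y) x.
Proof.
  destruct n as [|n]; intros x; simpl.
  - apply continuous_id.
  - split. apply filter_forall. intros y. apply ex_derive_id.
    apply (Ck_ext n (fun _ => 1)). apply filter_forall. intros y. rewrite Derive_id; auto. apply Ck_const.
Qed.

Lemma Ck_plus n : forall g h x, Ck n g x -> Ck n h x -> Ck n (fun y => g y + h y) x.
Proof.
  induction n as [|n IH]; intros g h x Hg Hh; simpl in *.
  - apply (continuous_plus g h x Hg Hh).
  - destruct Hg as [Hg1 Hg2], Hh as [Hh1 Hh2]. split.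
    + generalize (filter_and _ _ Hg1 Hh1). apply filter_imp. intros y [H1 H2].
      apply (ex_derive_plus g h y H1 H2).
    + apply (Ck_ext n (fun y => Derive g y + Derive h y)).
      generalize (filter_and _ _ Hg1 Hh1). apply filter_imp. intros y [H1 H2].
      rewrite Derive_plus; auto. apply IH; auto.
Qed.

Lemma Ck_mult n : forall g h x, Ck n g x -> Ck n h x -> Ck n (fun y => g y * h y) x.
Proof.
  induction n as [|n IH]; intros g h x Hg Hh.
  - simpl in *. apply (continuous_mult g h x Hg Hh).
  - assert (Hg' := Ck_S_le _ _ _ Hg). assert (Hh' := Ck_S_le _ _ _ Hh).
    simpl in Hg, Hh. destruct Hg as [Hg1 Hg2], Hh as [Hh1 Hh2]. split.
    + generalize (filter_and _ _ Hg1 Hh1). apply filter_imp. intros y [H1 H2].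
      apply (ex_derive_mult g h y H1 H2).
    + apply (Ck_ext n (fun y => Derive g y * h y + g y * Derive h y)).
      generalize (filter_and _ _ Hg1 Hh1). apply filter_imp. intros y [H1 H2].
      rewrite Derive_mult; auto. apply Ck_plus; apply IH; auto.
Qed.

Lemma Ck_scal n c g x : Ck n g x -> Ck n (fun y => c * g y) x.
Proof. intros H. apply Ck_mult; auto. apply Ck_const. Qed.

Lemma Ck_opp n g x : Ck n g x -> Ck n (fun y => - g y) x.
Proof. intros H. apply (Ck_ext n (fun y => (-1) * g y)). apply filter_forall; intros; ring.
  apply Ck_scal; auto. Qed.

Lemma Ck_minus n g h x : Ck n g x -> Ck n h x -> Ck n (fun y => g y - h y) x.
Proof. intros H1 H2. apply Ck_plus; auto. apply Ck_opp; auto. Qed.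

Lemma Ck_inv n : forall g x, Ck n g x -> g x <> 0 -> Ck n (fun y => / g y) x.
Proof.
  induction n as [|n IH]; intros g x Hg Hx.
  - simpl in *. apply continuous_Rinv_comp; auto.
  - assert (Hg' := Ck_S_le _ _ _ Hg).
    assert (Hc : continuous g x) by (apply (Ck_le 0 (S n)); auto; lia).
    assert (Hnz : locally x (fun y => g y <> 0)).
    { assert (Hp : 0 < Rabs (g x)) by (apply Rabs_pos_lt; auto).
      specialize (Hc (ball (g x) (mkposreal _ Hp)) (locally_ball _ _)).
      eapply filter_imp; [|exact Hc]. intros y Hy Hy0. simpl in Hy.
      unfold ball in Hy; simpl in Hy; unfold AbsRing_ball, abs, minus, plus, opp in Hy; simpl in Hy.
      rewrite Hy0 in Hy. rewrite Rplus_0_l, Rabs_Ropp in Hy. lra. }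
    simpl in Hg. destruct Hg as [Hg1 Hg2]. split.
    + generalize (filter_and _ _ Hg1 Hnz). apply filter_imp. intros y [H1 H2].
      apply ex_derive_inv; auto.
    + apply (Ck_ext n (fun y => (- Derive g y) * (/ g y) * (/ g y))).
      generalize (filter_and _ _ Hg1 Hnz). apply filter_imp. intros y [H1 H2].
      rewrite Derive_inv; auto. field; auto.
      apply Ck_mult; [apply Ck_mult|]; auto. apply Ck_opp; auto.
Qed.

Lemma Ck_aff n : forall g a b x, Ck n g (a*x+b) -> Ck n (fun y => g (a*y+b)) x.
Proof.
  induction n as [|n IH]; intros g a b x Hg.
  - simpl in *. apply (continuous_comp (fun y => a*y+b) g). apply cont_aff. exact Hg.
  - simpl in Hg. destruct Hg as [Hg1 Hg2].
    assert (Ha : forall y, ex_derive (fun y => a*y+b) y).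
    { intros y. apply (ex_derive_plus (fun y => a*y) (fun _ => b)).
      apply (ex_derive_scal (fun y => y)). apply ex_derive_id. apply ex_derive_const. }
    assert (HDa : forall y, Derive (fun y => a*y+b) y = a).
    { intros y. rewrite Derive_plus. rewrite Derive_const. rewrite Derive_scal. rewrite Derive_id. ring.
      apply (ex_derive_scal (fun y => y)). apply ex_derive_id. apply ex_derive_const. }
    assert (Hl := loc_aff a b x _ Hg1). split.
    + eapply filter_imp; [|exact Hl]. intros y Hy. apply (ex_derive_comp g (fun y => a*y+b)); auto.
    + apply (Ck_ext n (fun y => a * Derive g (a*y+b))).
      eapply filter_imp; [|exact Hl]. intros y Hy.
      rewrite (Derive_comp g (fun y => a*y+b)); auto. rewrite HDa. auto.
      apply Ck_scal. apply IH. auto.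
Qed.

Lemma Ck_prim n P F x : locally x (fun y => is_derive P y (F y)) -> Ck n F x -> Ck (S n) P x.
Proof.
  intros Hl HF. simpl. split.
  - eapply filter_imp; [|exact Hl]. intros y Hy. exists (F y); auto.
  - apply (Ck_ext n F); auto. eapply filter_imp; [|exact Hl]. intros y Hy.
    symmetry. apply is_derive_unique; auto.
Qed.

Lemma Ck_smooth : forall n g x, (forall m, Ck m g x) -> ex_derive_n g n x.
Proof.
  induction n as [|n IH]; intros g x H.
  - exact I.
  - destruct n as [|n].
    + simpl. destruct (H 1%nat) as [H1 _]. apply locally_singleton in H1. exact H1.
    + assert (H' : forall m, Ck m (Derive g) x).
      { intros m. destruct (H (S m)) as [_ H2]. exact H2. }
      specialize (IH (Derive g) x H'). simpl in IH |- *.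
      eapply ex_derive_ext; [|exact IH]. intros y. simpl.
      transitivity (Derive_n (Derive_n g 1) n y).
      apply Derive_n_ext. intros; reflexivity.
      rewrite Derive_n_comp. replace (n+1)%nat with (S n) by lia. reflexivity.
Qed.

Lemma deriv_cont (h : R -> R) x l : is_derive h x l -> continuity_pt h x.
Proof. intros H. apply continuity_pt_filterlim.
  apply (@ex_derive_continuous R_AbsRing R_NormedModule h x). exists l; exact H. Qed.

Lemma deriv0_eq (h : R -> R) a b :
  (forall x, Rmin a b <= x <= Rmax a b -> is_derive h x 0) -> h a = h b.
Proof.
  intros H. destruct (MVT_gen h a b (fun _ => 0)) as [c [_ Hc]].
  - intros x Hx. apply H. lra.
  - intros x Hx. apply (deriv_cont _ _ 0). apply H; auto.
  - lra.
Qed.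

Lemma deriv_pos_lt (h d : R -> R) a b : a < b ->
  (forall x, a <= x <= b -> is_derive h x (d x) /\ 0 < d x) -> h a < h b.
Proof.
  intros Hab H. destruct (MVT_gen h a b d) as [c [Hc1 Hc]].
  - intros x Hx. rewrite Rmin_left in Hx by lra. rewrite Rmax_right in Hx by lra. apply H. lra.
  - intros x Hx. rewrite Rmin_left in Hx by lra. rewrite Rmax_right in Hx by lra.
    apply (deriv_cont _ _ (d x)). apply H; auto.
  - rewrite Rmin_left in Hc1 by lra. rewrite Rmax_right in Hc1 by lra.
    destruct (H c Hc1) as [_ Hd]. nra.
Qed.

Definition opn (I : R -> Prop) := forall x, I x -> exists e, 0 < e /\ forall y, Rabs (y - x) < e -> I y.
Definition cvx (I : R -> Prop) := forall x y w, I x -> I y -> x <= w <= y -> I w.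

Definition Hyp (I : R -> Prop) (t : R) (phi F : R -> R) :=
  opn I /\ cvx I /\ 0 < t < 1 /\
  (forall x y, I x -> I y -> x < y -> phi x < phi y) /\
  (forall x, I x -> 0 < F x) /\
  (forall x y, I x -> I y ->
     (t * F x + (1 - t) * F y) * phi (t * x + (1 - t) * y)
     = t * F x * phi x + (1 - t) * F y * phi y).

Lemma Hyp_le I t phi F : Hyp I t phi F -> forall x y, I x -> I y -> x <= y -> phi x <= phi y.
Proof. intros (_&_&_&Hm&_) x y Hx Hy Hxy. destruct (Req_dec x y). subst; lra.
  left; apply Hm; auto; lra. Qed.

Lemma Hyp_star I t phi F : Hyp I t phi F -> forall x y, I x -> I y ->
  t * F x * (phi (t*x+(1-t)*y) - phi x) = (1-t) * F y * (phi y - phi (t*x+(1-t)*y)).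
Proof. intros (_&_&_&_&_&He) x y Hx Hy. specialize (He x y Hx Hy). lra. Qed.

Lemma Hyp_mid I t phi F : Hyp I t phi F -> forall x y, I x -> I y -> x <= y ->
  I (t*x+(1-t)*y).
Proof. intros (_&Hc&Ht&_) x y Hx Hy Hxy. apply (Hc x y); auto. nra. Qed.

Lemma bounds I t phi F : Hyp I t phi F -> forall p, I p ->
  exists rho m M, 0 < rho /\ 0 < m /\ forall y, Rabs (y - p) < rho -> I y /\ m <= F y <= M.
Proof.
  intros HH p Hp. assert (HH' := HH). destruct HH' as (Ho&Hc&Ht&Hm&HF&He).
  destruct (Ho p Hp) as [e [He0 Hb]].
  set (d := e/2). set (x0 := p - d). set (rho := t*d/4). set (s := 1 - t).
  assert (Hd : 0 < d) by (unfold d; lra).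
  assert (Hrho : 0 < rho) by (unfold rho; nra).
  assert (Hrd : rho < d) by (unfold rho; nra).
  assert (Hx0 : I x0) by (apply Hb; unfold x0; rewrite Rabs_left; unfold d; lra).
  assert (Hpm : I (p - rho)) by (apply Hb; rewrite Rabs_left; unfold d in *; lra).
  assert (Hpp : I (p + rho)) by (apply Hb; rewrite Rabs_right; unfold d in *; lra).
  assert (Hin : forall y, Rabs (y - p) < rho -> I y).
  { intros y Hy. apply Hb. unfold d in *; lra. }
  set (zl := t*x0 + (1-t)*(p-rho)). set (zh := t*x0 + (1-t)*(p+rho)).
  assert (Izl : I zl) by (apply (Hyp_mid _ _ _ _ HH); auto; unfold x0; lra).
  assert (Izh : I zh) by (apply (Hyp_mid _ _ _ _ HH); auto; unfold x0; lra).
  set (Am := phi zl - phi x0). set (Ap := phi (p+rho) - phi x0). set (Dm := phi (p-rho) - phi zh).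
  assert (HAm : 0 < Am) by (unfold Am; assert (phi x0 < phi zl) by (apply Hm; auto; unfold zl, x0; nra); lra).
  assert (HAp : 0 < Ap) by (unfold Ap; assert (phi x0 < phi (p+rho)) by (apply Hm; auto; unfold x0; lra); lra).
  assert (HDm : 0 < Dm).
  { unfold Dm. assert (phi zh < phi (p-rho)); [|lra]. apply Hm; auto.
    assert (Htd : 0 < t * d) by nra.
    assert (Hq : (2 - t) * rho < t * d) by (unfold rho; nra).
    unfold zh, x0. nra. }
  assert (HF0 := HF x0 Hx0).
  exists rho, (t * F x0 * Am / ((1-t) * Ap)), (t * F x0 * Ap / ((1-t) * Dm)).
  split; auto. split. { apply Rdiv_lt_0_compat; repeat apply Rmult_lt_0_compat; lra. }
  intros y Hy. assert (Iy := Hin y Hy). split; auto.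
  assert (Hy1 : p - rho < y < p + rho) by (apply Rabs_def2 in Hy; lra).
  set (z := t*x0+(1-t)*y).
  assert (Iz : I z) by (apply (Hyp_mid _ _ _ _ HH); auto; unfold x0; lra).
  assert (Hst := Hyp_star _ _ _ _ HH x0 y Hx0 Iy). fold z in Hst.
  assert (N1 : Am <= phi z - phi x0).
  { unfold Am. assert (phi zl <= phi z); [|lra]. apply (Hyp_le _ _ _ _ HH); auto. unfold zl, z. nra. }
  assert (N2 : phi z - phi x0 <= Ap).
  { unfold Ap. assert (phi z <= phi (p+rho)); [|lra]. apply (Hyp_le _ _ _ _ HH); auto. unfold z, x0. nra. }
  assert (D1 : Dm <= phi y - phi z).
  { unfold Dm. assert (phi (p-rho) <= phi y) by (apply (Hyp_le _ _ _ _ HH); auto; lra).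
    assert (phi z <= phi zh) by (apply (Hyp_le _ _ _ _ HH); auto; unfold z, zh; nra). lra. }
  assert (D2 : phi y - phi z <= Ap).
  { unfold Ap. assert (phi y <= phi (p+rho)) by (apply (Hyp_le _ _ _ _ HH); auto; lra).
    assert (phi x0 <= phi z) by (apply (Hyp_le _ _ _ _ HH); auto; unfold z, x0; nra). lra. }
  assert (HFy := HF y Iy). split.
  - assert (Hk0 : 0 < t * F x0) by nra. assert (Hk1 : 0 < (1-t) * F y) by nra.
    apply Rmult_le_reg_r with ((1-t)*Ap). nra.
    unfold Rdiv. rewrite Rmult_assoc, Rinv_l, Rmult_1_r by nra.
    apply Rle_trans with (t * F x0 * (phi z - phi x0)). apply Rmult_le_compat_l; lra.
    rewrite Hst. replace (F y * ((1-t)*Ap)) with ((1-t) * F y * Ap) by ring.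
    apply Rmult_le_compat_l; lra.
  - assert (Hk0 : 0 < t * F x0) by nra. assert (Hk1 : 0 < (1-t) * F y) by nra.
    apply Rmult_le_reg_r with ((1-t)*Dm). nra.
    unfold Rdiv. rewrite Rmult_assoc, Rinv_l, Rmult_1_r by nra.
    apply Rle_trans with (t * F x0 * (phi z - phi x0)).
    2:{ apply Rmult_le_compat_l; lra. }
    rewrite Hst. replace (F y * ((1-t)*Dm)) with ((1-t) * F y * Dm) by ring.
    apply Rmult_le_compat_l; lra.
Qed.

Lemma pow_le1' r N : 0 <= r <= 1 -> r ^ N <= 1.
Proof. intros H. induction N; simpl. lra. assert (0 <= r ^ N) by (apply pow_le; lra). nra. Qed.

Lemma phi_gap I t phi F : Hyp I t phi F -> forall p, I p -> forall eta, 0 < eta ->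
  exists d, 0 < d /\ I (p - d) /\ I (p + d) /\ phi (p + d) - phi (p - d) < eta.
Proof.
  intros HH p Hp eta Heta. assert (HH' := HH). destruct HH' as (Ho&Hc&Ht&Hm&HF&He).
  destruct (bounds _ _ _ _ HH p Hp) as (rho & m & M & Hrho & Hm0 & Hb).
  assert (HM : m <= M) by (destruct (Hb p) as [_ [h1 h2]]; [rewrite Rminus_diag, Rabs_R0; lra|lra]).
  destruct (Classical_Prop.classic (exists d, 0 < d /\ I (p - d) /\ I (p + d) /\ phi (p + d) - phi (p - d) < eta)) as [Hy|Hn]; auto.
  exfalso.
  assert (Hge : forall d, 0 < d < rho -> eta <= phi (p+d) - phi (p-d)).
  { intros d Hd. apply Rnot_lt_le. intros Hlt. apply Hn. exists d. split; [lra|]. split.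
    apply Hb. replace (p - d - p) with (-d) by ring. rewrite Rabs_Ropp, Rabs_right; lra. split.
    apply Hb. replace (p + d - p) with d by ring. rewrite Rabs_right; lra. exact Hlt. }
  set (k := 2*t/(1-t)).
  assert (Hk : 0 < k) by (unfold k; apply Rdiv_lt_0_compat; lra).
  set (e0 := rho / (2*(k+1))).
  assert (He0 : 0 < e0) by (unfold e0; apply Rdiv_lt_0_compat; lra).
  assert (He0k : (k+1) * e0 < rho) by (unfold e0; field_simplify; lra).
  set (c := t * m * eta / ((1-t) * M)).
  assert (Hc0 : 0 < c) by (unfold c; apply Rdiv_lt_0_compat; [repeat apply Rmult_lt_0_compat|apply Rmult_lt_0_compat]; lra).
  assert (Hstep : forall e, 0 < e <= e0 -> c <= phi (p + k*e) - phi (p + t*e)).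
  { intros e Hee. 
    assert (Ix : I (p - e)) by (apply Hb; rewrite Rabs_left; nra).
    assert (Iy : I (p + k*e)) by (apply Hb; rewrite Rabs_right; nra).
    assert (Iz : I (p + t*e)) by (apply Hb; rewrite Rabs_right; nra).
    assert (Ixt : I (p - t*e)) by (apply Hb; rewrite Rabs_left; nra).
    assert (Hst := Hyp_star _ _ _ _ HH _ _ Ix Iy).
    replace (t * (p - e) + (1 - t) * (p + k * e)) with (p + t*e) in Hst by (unfold k; field; lra).
    assert (Hg := Hge (t*e) ltac:(nra)).
    assert (h1 : phi (p - e) <= phi (p - t*e)) by (apply (Hyp_le _ _ _ _ HH); auto; nra).
    assert (h2 : phi (p + t*e) < phi (p + k*e)) by (apply Hm; auto; unfold k; 
      assert (t < 2*t/(1-t)) by (apply Rmult_lt_reg_r with (1-t); [lra|]; unfold Rdiv; rewrite Rmult_assoc, Rinv_l; nra); nra).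
    destruct (Hb (p-e)) as [_ [Fx _]]. rewrite Rabs_left; nra.
    destruct (Hb (p+k*e)) as [_ [_ Fy]]. rewrite Rabs_right; nra.
    assert (Hl : t * m * eta <= (1-t) * M * (phi (p + k*e) - phi (p + t*e))).
    { apply Rle_trans with (t * F (p-e) * (phi (p + t * e) - phi (p - e))).
      - assert (0 <= t * m) by nra. 
        apply Rle_trans with (t * m * (phi (p + t * e) - phi (p - e))). apply Rmult_le_compat_l; lra.
        apply Rmult_le_compat_r. lra. nra.
      - rewrite Hst. apply Rmult_le_compat_r. lra. nra. }
    unfold c. apply Rmult_le_reg_r with ((1-t)*M). nra.
    unfold Rdiv. rewrite Rmult_assoc, Rinv_l, Rmult_1_r by nra. lra. }
  set (r := (1-t)/2).
  assert (Hr : 0 < r <= 1) by (unfold r; lra).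
  assert (Hkr : k * r = t) by (unfold k, r; field; lra).
  assert (Hind : forall N, INR N * c <= phi (p + k*e0) - phi (p + k*(e0 * r^N))).
  { induction N as [|N IH].
    - simpl. rewrite Rmult_1_r. lra.
    - rewrite S_INR. 
      assert (HrN : 0 < r^N <= 1) by (split; [apply pow_lt; lra| apply pow_le1'; lra]).
      assert (Hs := Hstep (e0 * r^N) ltac:(split; nra)).
      replace (k * (e0 * r ^ S N)) with (t * (e0 * r^N)) by (simpl; rewrite <- Hkr; ring). lra. }
  assert (HL : forall N, INR N * c <= phi (p + k*e0) - phi p).
  { intros N. specialize (Hind N).
    assert (HrN : 0 < r^N <= 1) by (split; [apply pow_lt; lra| apply pow_le1'; lra]).
    assert (phi p <= phi (p + k * (e0 * r^N))); [|lra].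
    assert (Hq : 0 < e0 * r^N <= e0) by (split; nra).
    assert (Hq2 : k * (e0 * r^N) <= k * e0) by (apply Rmult_le_compat_l; lra).
    assert (Hq3 : 0 < k * (e0 * r^N)) by (apply Rmult_lt_0_compat; lra).
    apply (Hyp_le _ _ _ _ HH); auto. apply Hb. replace (p + k * (e0 * r ^ N) - p) with (k * (e0 * r ^ N)) by ring.
    rewrite Rabs_right; lra. lra. }
  destruct (INR_archimed c (phi (p + k*e0) - phi p) Hc0) as [N HN].
  specialize (HL N). lra.
Qed.

Lemma phi_cont I t phi F : Hyp I t phi F -> forall p, I p -> continuous phi p.
Proof.
  intros HH p Hp. intros P HP. apply locR_inv in HP. destruct HP as [eta [Heta HP]].
  destruct (phi_gap _ _ _ _ HH p Hp eta Heta) as (d & Hd & Im & Ip & Hlt).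
  apply locR. exists d. split; auto. intros y Hy. apply HP.
  assert (HH' := HH). destruct HH' as (Ho&Hc&_).
  apply Rabs_def2 in Hy.
  assert (Iy : I y) by (apply (Hc (p-d) (p+d)); auto; lra).
  assert (phi (p-d) <= phi y) by (apply (Hyp_le _ _ _ _ HH); auto; lra).
  assert (phi y <= phi (p+d)) by (apply (Hyp_le _ _ _ _ HH); auto; lra).
  assert (phi (p-d) <= phi p) by (apply (Hyp_le _ _ _ _ HH); auto; lra).
  assert (phi p <= phi (p+d)) by (apply (Hyp_le _ _ _ _ HH); auto; lra).
  apply Rabs_def1; lra.
Qed.

Lemma F_Ck I t phi F n : Hyp I t phi F -> (forall w, I w -> Ck n phi w) -> forall y0, I y0 -> Ck n F y0.
Proof.
  intros HH Hphi y0 Hy0. assert (HH' := HH). destruct HH' as (Ho&Hc&Ht&Hm&HF&He).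
  destruct (Ho y0 Hy0) as [e [He0 Hb]].
  set (x0 := y0 - e/2).
  assert (Ix0 : I x0) by (apply Hb; unfold x0; replace (y0 - e/2 - y0) with (-(e/2)) by ring; rewrite Rabs_Ropp, Rabs_right; lra).
  set (g := fun y => (F x0 * (t/(1-t))) * ((phi ((1-t)*y + t*x0) - phi x0) * / (phi y - phi ((1-t)*y + t*x0)))).
  apply (Ck_ext n g).
  - apply locR. exists (e/2). split; [lra|]. intros y Hy.
    assert (Iy : I y) by (apply Hb; lra).
    apply Rabs_def2 in Hy.
    assert (Hst := Hyp_star _ _ _ _ HH x0 y Ix0 Iy).
    replace (t * x0 + (1 - t) * y) with ((1-t)*y + t*x0) in Hst by ring.
    assert (Iz : I ((1-t)*y + t*x0)) by (apply (Hc x0 y); auto; unfold x0 in *; nra).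
    assert (Hlt : phi ((1-t)*y + t*x0) < phi y) by (apply Hm; auto; unfold x0 in *; nra).
    unfold g. apply Rmult_eq_reg_r with ((1-t) * (phi y - phi ((1 - t) * y + t * x0))).
    2:{ apply Rmult_integral_contrapositive; split; lra. }
    replace (F y * ((1 - t) * (phi y - phi ((1 - t) * y + t * x0)))) with ((1 - t) * F y * (phi y - phi ((1 - t) * y + t * x0))) by ring.
    rewrite <- Hst. field. lra.
  - assert (Iz0 : I ((1-t)*y0 + t*x0)) by (apply (Hc x0 y0); auto; unfold x0 in *; nra).
    assert (Hlt : phi ((1-t)*y0 + t*x0) < phi y0) by (apply Hm; auto; unfold x0 in *; nra).
    unfold g. apply Ck_mult. apply Ck_const. apply Ck_mult.
    + apply Ck_minus. apply (Ck_aff n phi (1-t) (t*x0) y0). auto. apply Ck_const.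
    + apply Ck_inv. apply Ck_minus. auto. apply (Ck_aff n phi (1-t) (t*x0) y0). auto. lra.
Qed.

Lemma prim I F : opn I -> cvx I -> (forall w, I w -> continuous F w) -> forall w0, I w0 ->
  exists P : R -> R, forall x, I x -> is_derive P x (F x).
Proof.
  intros Ho Hc HF w0 Hw0. exists (RInt F w0). intros x Hx.
  apply (is_derive_RInt F (RInt F w0) w0 x); [|apply HF; auto].
  destruct (Ho x Hx) as [e [He Hb]]. apply locR. exists e. split; auto. intros b Hb'.
  apply (@RInt_correct R_CompleteNormedModule). apply (@ex_RInt_continuous R_CompleteNormedModule). intros z Hz. apply HF.
  assert (Ib : I b) by (apply Hb; auto).
  destruct (Rle_dec w0 b).
  - rewrite Rmin_left, Rmax_right in Hz by lra. apply (Hc w0 b); auto.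
  - rewrite Rmin_right, Rmax_left in Hz by lra. apply (Hc b w0); auto.
Qed.

Lemma phi_up I t phi F n : Hyp I t phi F -> (forall w, I w -> Ck n phi w /\ Ck n F w) ->
  forall z0, I z0 -> Ck (S n) phi z0.
Proof.
  intros HH Hn z0 Hz0. assert (HH' := HH). destruct HH' as (Ho&Hc&Ht&Hm&HF&He).
  assert (HFc : forall w, I w -> continuous F w).
  { intros w Hw. apply (Ck_le 0 n F w); [lia|]. apply Hn; auto. }
  set (G := fun w => F w * phi w).
  assert (HGn : forall w, I w -> Ck n G w).
  { intros w Hw. apply Ck_mult; apply Hn; auto. }
  assert (HGc : forall w, I w -> continuous G w).
  { intros w Hw. apply (Ck_le 0 n G w); [lia|]. auto. }
  destruct (prim I F Ho Hc HFc z0 Hz0) as [P HP].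
  destruct (prim I G Ho Hc HGc z0 Hz0) as [Q HQ].
  assert (HPk : forall w, I w -> Ck (S n) P w).
  { intros w Hw. apply (Ck_prim n P F w). 2:{ apply Hn; auto. }
    destruct (Ho w Hw) as [e [He0 Hb]]. apply locR. exists e. split; [exact He0|]. intros y Hy. apply HP. auto. }
  assert (HQk : forall w, I w -> Ck (S n) Q w).
  { intros w Hw. apply (Ck_prim n Q G w). 2:{ auto. }
    destruct (Ho w Hw) as [e [He0 Hb]]. apply locR. exists e. split; [exact He0|]. intros y Hy. apply HQ. auto. }
  destruct (Ho z0 Hz0) as [e [He0 Hb]].
  set (d := e*(1-t)/4).
  assert (Hd : 0 < d) by (unfold d; nra).
  assert (Hde : d < e) by (unfold d; nra).
  assert (Hde2 : (1-t)*e = 4*d) by (unfold d; field).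
  set (u := fun x z => /(1-t)*z + -(t*x) * /(1-t)).
  assert (Hu : forall x z, t*x + (1-t) * u x z = z) by (intros; unfold u; field; lra).
  assert (HuI : forall x z, Rabs (x - z0) <= d -> Rabs (z - z0) < d -> I (u x z)).
  { intros x z Hx Hz. apply Hb.
    assert (Hk : (1-t)*(u x z - z0) = (z - z0) - t*(x - z0)) by (unfold u; field; lra).
    apply Rabs_def2 in Hz. apply Rabs_le_between in Hx.
    assert (t*(x-z0) <= d) by nra. assert (-d <= t*(x-z0)) by nra.
    apply Rabs_def1.
    - apply Rmult_lt_reg_l with (1-t); [lra|]. rewrite Hk. lra.
    - apply Rmult_lt_reg_l with (1-t); [lra|]. 
      replace ((1-t) * - e) with (-((1-t)*e)) by ring. rewrite Hk. lra. }
  set (c := (1-t)^2/t).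
  assert (Hc0 : 0 < c) by (unfold c; apply Rdiv_lt_0_compat; nra).
  set (A := fun z => t*(P (z0+d) - P (z0-d)) - c * (P (u (z0+d) z) - P (u (z0-d) z))).
  set (B := fun z => t*(Q (z0+d) - Q (z0-d)) - c * (Q (u (z0+d) z) - Q (u (z0-d) z))).
  assert (Hkey : forall z, Rabs (z - z0) < d -> B z = phi z * A z).
  { intros z Hz.
    set (Phi := fun x => (t * Q x - c * Q (u x z)) - phi z * (t * P x - c * P (u x z))).
    assert (H0 : Phi (z0 - d) = Phi (z0 + d)).
    { apply deriv0_eq. intros x Hx. rewrite Rmin_left, Rmax_right in Hx by lra.
      assert (Hx' : Rabs (x - z0) <= d) by (apply Rabs_le; lra).
      assert (Ix : I x) by (apply Hb; lra).
      assert (Iu := HuI x z Hx' Hz).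
      unfold Phi, u. auto_derive.
      - repeat split; first [exists (G x); apply HQ; auto | exists (F x); apply HP; auto
          | exists (G (u x z)); apply HQ; auto | exists (F (u x z)); apply HP; auto | idtac].
      - set (U := / (1 - t) * z + - (t * x) * / (1 - t)) in *.
        change (u x z) with U in Iu.
        assert (HuU : t * x + (1-t) * U = z) by (apply (Hu x z)).
        assert (DQx : Derive (fun x0 => Q x0) x = G x) by (apply is_derive_unique; apply HQ; auto).
        assert (DQu : Derive (fun x0 => Q x0) U = G U) by (apply is_derive_unique; apply HQ; auto).
        assert (DPx : Derive (fun x0 => P x0) x = F x) by (apply is_derive_unique; apply HP; auto).
        assert (DPu : Derive (fun x0 => P x0) U = F U) by (apply is_derive_unique; apply HP; auto).
        rewrite DQx, DQu, DPx, DPu.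
        assert (Eq := He x U Ix Iu). rewrite HuU in Eq. unfold G, c.
        transitivity (t*F x*phi x + (1-t)*F U*phi U - phi z*(t*F x+(1-t)*F U)).
        + field. lra.
        + rewrite <- Eq. ring. }
    unfold Phi in H0. unfold A, B. lra. }
  assert (HPinc : forall a b, I a -> I b -> a < b -> P a < P b).
  { intros a b Ia Ib Hab. apply (deriv_pos_lt P F a b Hab). intros x Hx.
    assert (Ix : I x) by (apply (Hc a b); auto). split; [apply HP|apply HF]; auto. }
  assert (HApos : forall z, Rabs (z - z0) < d -> 0 < A z).
  { intros z Hz. unfold A.
    assert (Im : I (z0 - d)) by (apply Hb; replace (z0 - d - z0) with (-d) by ring; rewrite Rabs_Ropp, Rabs_right; lra).
    assert (Ip : I (z0 + d)) by (apply Hb; replace (z0 + d - z0) with d by ring; rewrite Rabs_right; lra).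
    assert (h1 : P (z0 - d) < P (z0 + d)) by (apply HPinc; auto; lra).
    assert (Ium : I (u (z0 - d) z)) by (apply HuI; auto; replace (z0 - d - z0) with (-d) by ring; rewrite Rabs_Ropp, Rabs_right; lra).
    assert (Iup : I (u (z0 + d) z)) by (apply HuI; auto; replace (z0 + d - z0) with d by ring; rewrite Rabs_right; lra).
    assert (h2 : P (u (z0 + d) z) < P (u (z0 - d) z)).
    { apply HPinc; auto. unfold u.
      assert (Hi : 0 < / (1 - t)) by (apply Rinv_0_lt_compat; lra).
      assert (t * (z0 - d) < t * (z0 + d)) by nra. nra. }
    nra. }
  assert (HA0 : 0 < A z0) by (apply HApos; rewrite Rminus_diag, Rabs_R0; lra).
  apply (Ck_ext (S n) (fun z => B z * / A z)).
  - apply locR. exists d. split; [exact Hd|]. intros z Hz.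
    rewrite (Hkey z Hz). assert (0 < A z) by (apply HApos; auto). field. lra.
  - assert (Ium : I (u (z0 - d) z0)) by (apply HuI; [replace (z0 - d - z0) with (-d) by ring; rewrite Rabs_Ropp, Rabs_right; lra| rewrite Rminus_diag, Rabs_R0; lra]).
    assert (Iup : I (u (z0 + d) z0)) by (apply HuI; [replace (z0 + d - z0) with d by ring; rewrite Rabs_right; lra| rewrite Rminus_diag, Rabs_R0; lra]).
    apply Ck_mult.
    + unfold B. apply Ck_minus. apply Ck_const. apply Ck_scal. apply Ck_minus.
      * apply (Ck_aff (S n) Q (/(1-t)) (-(t*(z0+d)) * /(1-t)) z0). apply HQk. exact Iup.
      * apply (Ck_aff (S n) Q (/(1-t)) (-(t*(z0-d)) * /(1-t)) z0). apply HQk. exact Ium.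
    + apply Ck_inv; [|lra]. unfold A. apply Ck_minus. apply Ck_const. apply Ck_scal. apply Ck_minus.
      * apply (Ck_aff (S n) P (/(1-t)) (-(t*(z0+d)) * /(1-t)) z0). apply HPk. exact Iup.
      * apply (Ck_aff (S n) P (/(1-t)) (-(t*(z0-d)) * /(1-t)) z0). apply HPk. exact Ium.
Qed.

Lemma Ck_all I t phi F : Hyp I t phi F -> forall n w, I w -> Ck n phi w /\ Ck n F w.
Proof.
  intros HH n. induction n as [|n IH]; intros w Hw.
  - assert (Hc : forall w, I w -> Ck 0 phi w) by (intros; simpl; apply (phi_cont _ _ _ _ HH); auto).
    split; auto. apply (F_Ck _ _ _ _ 0 HH Hc); auto.
  - assert (Hc : forall w, I w -> Ck (S n) phi w) by (intros; apply (phi_up _ _ _ _ n HH IH); auto).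
    split; auto. apply (F_Ck _ _ _ _ (S n) HH Hc); auto.
Qed.


Lemma Ck_ex n g x : Ck (S n) g x -> ex_derive g x.
Proof. intros [H _]. apply locally_singleton in H. exact H. Qed.

Lemma core I t phi F : Hyp I t phi F -> (exists w, I w) ->
  smooth_on I F /\ smooth_on I phi /\
  exists gamma, gamma <> 0 /\ forall x, I x -> F x ^ 2 * Derive phi x = gamma.
Proof.
  intros HH [w0 Hw0]. assert (HH' := HH). destruct HH' as (Ho&Hc&Ht&Hm&HF&He).
  assert (HA := Ck_all _ _ _ _ HH).
  split; [|split].
  { intros n x Hx. apply Ck_smooth. intros m. apply (HA m x Hx). }
  { intros n x Hx. apply Ck_smooth. intros m. apply (HA m x Hx). }
  set (G := fun w => F w * phi w).
  assert (HG : forall n w, I w -> Ck n G w) by (intros n w Hw; apply Ck_mult; apply HA; auto).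
  assert (exF : forall w, I w -> ex_derive F w) by (intros w Hw; apply (Ck_ex 0); apply HA; auto).
  assert (exP : forall w, I w -> ex_derive phi w) by (intros w Hw; apply (Ck_ex 0); apply HA; auto).
  assert (exG : forall w, I w -> ex_derive G w) by (intros w Hw; apply (Ck_ex 0); apply HG; auto).
  assert (exF1 : forall w, I w -> ex_derive (Derive F) w).
  { intros w Hw. destruct (HA 2%nat w Hw) as [_ H]. destruct H as [_ H]. apply (Ck_ex 0). exact H. }
  assert (exG1 : forall w, I w -> ex_derive (Derive G) w).
  { intros w Hw. destruct (HG 2%nat w Hw) as [_ H]. apply (Ck_ex 0). exact H. }
  remember (Derive F) as F1 eqn:HF1. remember (Derive G) as G1 eqn:HG1.
  remember (Derive F1) as F2 eqn:HF2. remember (Derive G1) as G2 eqn:HG2.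
  assert (K : forall z, I z -> G2 z = phi z * F2 z).
  { intros z Hz. destruct (Ho z Hz) as [e [He0 Hb]].
    set (r := e*(1-t)/2).
    assert (Hr : 0 < r) by (unfold r; nra). assert (Hre : r < e) by (unfold r; nra).
    set (u := fun x => /(1-t)*z + -(t*x)*/(1-t)).
    assert (Hu : forall x, t*x + (1-t) * u x = z) by (intros; unfold u; field; lra).
    assert (HuI : forall x, Rabs (x - z) < r -> I (u x)).
    { intros x Hx. apply Hb. assert (Hk : (1-t)*(u x - z) = -(t*(x-z))) by (unfold u; field; lra).
      apply Rabs_def2 in Hx.
      assert (t*(x-z) < r) by nra. assert (-r < t*(x-z)) by nra.
      apply Rabs_def1.
      - apply Rmult_lt_reg_l with (1-t); [lra|]. rewrite Hk. unfold r in *. nra.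
      - apply Rmult_lt_reg_l with (1-t); [lra|].
        replace ((1-t) * - e) with (-((1-t)*e)) by ring. rewrite Hk. unfold r in *. nra. }
    assert (Hh : forall x, Rabs (x - z) < r -> t*(G x - phi z*F x) + (1-t)*(G (u x) - phi z*F (u x)) = 0).
    { intros x Hx. assert (Ix : I x) by (apply Hb; lra). assert (Iu := HuI x Hx).
      assert (E := He x (u x) Ix Iu). rewrite Hu in E. unfold G. lra. }
    assert (S1 : forall x, Rabs (x - z) < r/2 -> G1 x - phi z * F1 x - (G1 (u x) - phi z * F1 (u x)) = 0).
    { intros x Hx.
      assert (Ix : I x) by (apply Hb; lra). assert (Iu := HuI x ltac:(lra)).
      assert (Hd0 : is_derive (fun x => t*(G x - phi z*F x) + (1-t)*(G (u x) - phi z*F (u x))) x 0).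
      { apply (is_derive_ext_loc (fun _ => 0)). apply locR. exists (r/2). split; [lra|].
        intros y Hy. symmetry. apply Hh. 
        replace (y - z) with ((y - x) + (x - z)) by ring.
        apply Rle_lt_trans with (Rabs (y-x) + Rabs (x-z)). apply Rabs_triang. lra.
        apply (is_derive_const (K:=R_AbsRing) (V:=R_NormedModule)). }
      assert (Hd1 : is_derive (fun x => t*(G x - phi z*F x) + (1-t)*(G (u x) - phi z*F (u x))) x
         (t * (G1 x - phi z * F1 x - (G1 (u x) - phi z * F1 (u x))))).
      { unfold u. auto_derive.
        - repeat split; first [apply exG; assumption | apply exF; assumption].
        - rewrite HG1, HF1. change (fun x0 : R => G x0) with G. change (fun x0 : R => F x0) with F.
          field. lra. }
      apply is_derive_unique in Hd0. apply is_derive_unique in Hd1. rewrite Hd0 in Hd1.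
      assert (Htt : t <> 0) by lra. 
      apply Rmult_eq_reg_l with t; auto. rewrite <- Hd1. ring. }
    assert (Uz : / (1 - t) * z + - (t * z) * / (1 - t) = z) by (field; lra).
    assert (Hd0 : is_derive (fun x => G1 x - phi z * F1 x - (G1 (u x) - phi z * F1 (u x))) z 0).
    { apply (is_derive_ext_loc (fun _ => 0)). apply locR. exists (r/2). split; [lra|].
      intros y Hy. symmetry. apply S1. exact Hy.
      apply (is_derive_const (K:=R_AbsRing) (V:=R_NormedModule)). }
    assert (Hd1 : is_derive (fun x => G1 x - phi z * F1 x - (G1 (u x) - phi z * F1 (u x))) z
       ((G2 z - phi z * F2 z) * (1 + t/(1-t)))).
    { unfold u. auto_derive.
      - rewrite Uz. repeat split; first [apply exG1; assumption | apply exF1; assumption | rewrite HG1; apply exG1; assumption | rewrite HF1; apply exF1; assumption].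
      - rewrite Uz. rewrite HG2, HF2. change (fun x0 : R => G1 x0) with G1. change (fun x0 : R => F1 x0) with F1.
        field. lra. }
    apply is_derive_unique in Hd0. apply is_derive_unique in Hd1. rewrite Hd0 in Hd1.
    assert (Hne : 1 + t/(1-t) <> 0) by (assert (0 < t/(1-t)) by (apply Rdiv_lt_0_compat; lra); lra).
    symmetry in Hd1. apply Rmult_integral in Hd1. destruct Hd1 as [Hd1|Hd1]; [lra| contradiction]. }
  set (W := fun x => F x * G1 x - G x * F1 x).
  assert (HW0 : forall x, I x -> is_derive W x 0).
  { intros x Hx. unfold W. auto_derive.
    - repeat split; first [apply exF; assumption | apply exG; assumption
        | apply exG1; assumption | apply exF1; assumption
        | rewrite HG1; apply exG1; assumption | rewrite HF1; apply exF1; assumption].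
    - change (fun x0 : R => G1 x0) with G1. change (fun x0 : R => F1 x0) with F1.
      change (fun x0 : R => F x0) with F. change (fun x0 : R => G x0) with G.
      rewrite <- HG2, <- HF2, <- HG1, <- HF1. rewrite (K x Hx). unfold G. ring. }
  assert (HWc : forall x y, I x -> I y -> W x = W y).
  { intros x y Hx Hy. apply deriv0_eq. intros w Hw. apply HW0.
    destruct (Rle_dec x y).
    - rewrite Rmin_left, Rmax_right in Hw by lra. apply (Hc x y); auto.
    - rewrite Rmin_right, Rmax_left in Hw by lra. apply (Hc y x); auto. }
  assert (HWv : forall x, I x -> W x = F x ^ 2 * Derive phi x).
  { intros x Hx. unfold W. rewrite HG1, HF1. unfold G. rewrite Derive_mult; auto. ring. }
  exists (W w0). split.
  - intros H0.
    assert (HD : forall x, I x -> is_derive phi x 0).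
    { intros x Hx. assert (Hd := Derive_correct _ _ (exP x Hx)).
      assert (E : F x ^ 2 * Derive phi x = 0) by (rewrite <- HWv, (HWc x w0); auto).
      assert (0 < F x) by (apply HF; auto).
      assert (E2 : Derive phi x = 0).
      { apply Rmult_integral in E. destruct E as [E|E]; auto. simpl in E. nra. }
      rewrite E2 in Hd. exact Hd. }
    destruct (Ho w0 Hw0) as [e [He0 Hb]].
    assert (Iw1 : I (w0 + e/2)) by (apply Hb; replace (w0 + e/2 - w0) with (e/2) by ring; rewrite Rabs_right; lra).
    assert (Heq : phi w0 = phi (w0 + e/2)).
    { apply deriv0_eq. intros x Hx. rewrite Rmin_left, Rmax_right in Hx by lra. apply HD.
      apply (Hc w0 (w0 + e/2)); auto. }
    assert (phi w0 < phi (w0 + e/2)) by (apply Hm; auto; lra). lra.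
  - intros x Hx. rewrite <- HWv, (HWc x w0); auto.
Qed.


Lemma ioi_opn a b : opn (in_open_interval a b).
Proof.
  intros x [Ha Hb].
  set (e1 := match a with Finite r => x - r | _ => 1 end).
  set (e2 := match b with Finite r => r - x | _ => 1 end).
  assert (H1 : 0 < e1) by (unfold e1; destruct a; simpl in *; lra).
  assert (H2 : 0 < e2) by (unfold e2; destruct b; simpl in *; lra).
  exists (Rmin e1 e2). split. apply Rmin_glb_lt; auto.
  intros y Hy. apply Rabs_def2 in Hy.
  assert (Rmin e1 e2 <= e1) by apply Rmin_l. assert (Rmin e1 e2 <= e2) by apply Rmin_r.
  split.
  - unfold e1 in *; destruct a; simpl in *; lra.
  - unfold e2 in *; destruct b; simpl in *; lra.
Qed.

Lemma ioi_cvx a b : cvx (in_open_interval a b).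
Proof.
  intros x y w [Hxa Hxb] [Hya Hyb] Hw. split.
  - destruct a; simpl in *; lra.
  - destruct b; simpl in *; lra.
Qed.

Lemma ioi_ne a b : Rbar_lt a b -> exists w, in_open_interval a b w.
Proof.
  intros H. destruct a as [ra| |], b as [rb| |]; simpl in H; try contradiction.
  - exists ((ra+rb)/2). split; simpl; lra.
  - exists (ra+1). split; simpl; auto; lra.
  - exists (rb-1). split; simpl; auto; lra.
  - exists 0. split; simpl; auto.
Qed.

Lemma signed I t phi f s1 s2 : s1 * s1 = 1 -> s2 * s2 = 1 ->
  Hyp I t (fun x => s1 * phi x) (fun x => s2 * f x) -> (exists w, I w) ->
  smooth_on I f /\ smooth_on I phi /\
  exists gamma, gamma <> 0 /\ forall x, I x -> f x ^ 2 * Derive phi x = gamma.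
Proof.
  intros H1 H2 HH Hw. destruct (core _ _ _ _ HH Hw) as (SF & SP & g & Hg & Hgx).
  split; [|split].
  - intros n x Hx. apply (ex_derive_n_ext (fun y => s2 * (s2 * f y))).
    intros y. rewrite <- Rmult_assoc, H2. ring.
    apply ex_derive_n_scal_l. apply SF; auto.
  - intros n x Hx. apply (ex_derive_n_ext (fun y => s1 * (s1 * phi y))).
    intros y. rewrite <- Rmult_assoc, H1. ring.
    apply ex_derive_n_scal_l. apply SP; auto.
  - exists (s1 * g). split.
    + intros E. apply Hg. replace g with (s1 * (s1 * g)) by (rewrite <- Rmult_assoc, H1; ring).
      rewrite E. ring.
    + intros x Hx. specialize (Hgx x Hx). rewrite Derive_scal in Hgx.
      rewrite <- Hgx. transitivity ((s1*s1)*(s2*s2) * (f x ^2 * Derive phi x)).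
      rewrite H1, H2; ring. ring.
Qed.

Theorem theorem2p1 (a b : Rbar) (phi f : R -> R) (t : R) :
  Rbar_lt a b ->
  strictly_monotone_on (in_open_interval a b) phi ->
  0 < t < 1 ->
  (forall x y, in_open_interval a b x -> in_open_interval a b y ->
     (t * f x + (1 - t) * f y) * phi (t * x + (1 - t) * y)
     = t * f x * phi x + (1 - t) * f y * phi y) ->
  (forall x, in_open_interval a b x -> f x = 0) \/
  ((forall x, in_open_interval a b x -> f x <> 0) /\
   smooth_on (in_open_interval a b) f /\
   smooth_on (in_open_interval a b) phi /\
   exists gamma : R, gamma <> 0 /\
     forall x, in_open_interval a b x -> (f x) ^ 2 * Derive phi x = gamma).
Proof.
  intros Hab Hmono Ht Heq.
  set (I := in_open_interval a b) in *.
  assert (Ho : opn I) by apply ioi_opn. assert (Hc : cvx I) by apply ioi_cvx.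
  assert (Hne : exists w, I w) by (apply ioi_ne; auto).
  destruct (Classical_Prop.classic (forall x, I x -> f x = 0)) as [Hz|Hnz]; [left; auto|right].
  assert (Hx0 : exists x0, I x0 /\ f x0 <> 0).
  { apply Classical_Prop.NNPP. intros Hn. apply Hnz. intros x Hx.
    apply Classical_Prop.NNPP. intros Hfx. apply Hn. exists x. auto. }
  destruct Hx0 as [x0 [Ix0 Hfx0]].
  assert (Hinj : forall x y, I x -> I y -> x < y -> phi x <> phi y).
  { intros x y Hx Hy Hxy E. destruct Hmono as [Hi|Hd].
    - specialize (Hi x y Hx Hy Hxy). lra.
    - specialize (Hd x y Hx Hy Hxy). lra. }
  assert (Hmid : forall x y, I x -> I y -> I (t*x + (1-t)*y)).
  { intros x y Hx Hy. destruct (Rle_dec x y).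
    - apply (Hc x y); auto. nra.
    - apply (Hc y x); auto. nra. }
  assert (Hall : forall y, I y -> f y <> 0).
  { intros y Hy Hfy. assert (E := Heq y x0 Hy Ix0). rewrite Hfy in E.
    assert (E2 : (1-t) * f x0 * (phi (t*y + (1-t)*x0) - phi x0) = 0) by lra.
    assert (Iz := Hmid y x0 Hy Ix0).
    assert (Hyx : y <> x0) by (intros ->; contradiction).
    apply Rmult_integral in E2. destruct E2 as [E2|E2].
    - apply Rmult_integral in E2. destruct E2; [lra|contradiction].
    - destruct (Rlt_dec y x0).
      + apply (Hinj (t*y+(1-t)*x0) x0); auto. nra. lra.
      + apply (Hinj x0 (t*y+(1-t)*x0)); auto. nra. lra. }
  assert (Hss : forall x y, I x -> I y -> x < y -> 0 < f x * f y).
  { intros x y Hx Hy Hxy. assert (E := Heq x y Hx Hy).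
    set (z := t*x + (1-t)*y) in *.
    assert (Hz1 : x < z) by (unfold z; nra). assert (Hz2 : z < y) by (unfold z; nra).
    assert (Iz := Hmid x y Hx Hy). fold z in Iz.
    assert (HD : 0 < (phi z - phi x) * (phi y - phi z)).
    { destruct Hmono as [Hi|Hd].
      - assert (phi x < phi z) by auto. assert (phi z < phi y) by auto. nra.
      - assert (phi z < phi x) by auto. assert (phi y < phi z) by auto. nra. }
    assert (E2 : t * f x * (phi z - phi x) = (1-t) * f y * (phi y - phi z)) by lra.
    assert (Hfy := Hall y Hy).
    assert (Hq : 0 < (f y * (phi y - phi z))^2).
    { apply pow2_gt_0. apply Rmult_integral_contrapositive. split; auto. nra. }
    assert (E3 : t * (f x * f y) * ((phi z - phi x) * (phi y - phi z)) = (1-t) * (f y * (phi y - phi z))^2).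
    { replace (t * (f x * f y) * ((phi z - phi x) * (phi y - phi z))) with
        ((t * f x * (phi z - phi x)) * (f y * (phi y - phi z))) by ring. rewrite E2. ring. }
    assert (0 < t * (f x * f y) * ((phi z - phi x) * (phi y - phi z))) by (rewrite E3; nra).
    destruct (Rlt_le_dec 0 (f x * f y)); auto.
    assert (t * (f x * f y) <= 0) by nra. nra. }
  assert (Hsign : forall x, I x -> 0 < f x * f x0).
  { intros x Hx. destruct (Rtotal_order x x0) as [H|[H|H]].
    - apply Hss; auto.
    - subst. assert (0 < f x0 * f x0 \/ 0 < f x0 * f x0) by (left; nra). tauto.
    - rewrite Rmult_comm. apply Hss; auto. }
  split; auto.
  set (s2 := if Rlt_dec 0 (f x0) then 1 else -1).
  assert (Hs2 : s2 * s2 = 1) by (unfold s2; destruct (Rlt_dec 0 (f x0)); ring).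
  assert (Hs2f : 0 < s2 * f x0) by (unfold s2; destruct (Rlt_dec 0 (f x0)); [lra| assert (f x0 < 0) by lra; lra]).
  assert (HFpos : forall x, I x -> 0 < s2 * f x).
  { intros x Hx. assert (H := Hsign x Hx).
    assert (0 < (s2 * f x) * (s2 * f x0)).
    { replace ((s2 * f x) * (s2 * f x0)) with ((s2*s2) * (f x * f x0)) by ring. rewrite Hs2. lra. }
    nra. }
  destruct Hmono as [Hi|Hd].
  - apply (signed I t phi f 1 s2); auto. ring.
    split; [exact Ho|]. split; [exact Hc|]. split; [exact Ht|]. split; [|split; [exact HFpos|]].
    + intros x y Hx Hy Hxy. specialize (Hi x y Hx Hy Hxy). lra.
    + intros x y Hx Hy. specialize (Heq x y Hx Hy).
      replace ((t * (s2 * f x) + (1 - t) * (s2 * f y)) * (1 * phi (t * x + (1 - t) * y)))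
        with (s2 * ((t * f x + (1 - t) * f y) * phi (t * x + (1 - t) * y))) by ring.
      rewrite Heq. ring.
  - apply (signed I t phi f (-1) s2); auto. ring.
    split; [exact Ho|]. split; [exact Hc|]. split; [exact Ht|]. split; [|split; [exact HFpos|]].
    + intros x y Hx Hy Hxy. specialize (Hd x y Hx Hy Hxy). lra.
    + intros x y Hx Hy. specialize (Heq x y Hx Hy).
      replace ((t * (s2 * f x) + (1 - t) * (s2 * f y)) * (-1 * phi (t * x + (1 - t) * y)))
        with (- s2 * ((t * f x + (1 - t) * f y) * phi (t * x + (1 - t) * y))) by ring.
      rewrite Heq. ring.
Qed.
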